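(* Let $g_{n,j}$ be the number of decorated partial dual skew Dyck paths consisting of $n$ steps and ending at level $j$, and let $G(z,u)=\sum_{n,j\ge0}g_{n,j}z^nu^j$. Put $W=\sqrt{1-6z^2+5z^4}$, with the branch satisfying $W=1$ at $z=0$, and $$s_1=\frac{2z}{1+z^2-W},\qquad S=\frac{1+z^2-W}{2z^2}.$$ Then $$G(z,u)=\frac{3z^2-3+W}{2z(2-z^2)(u-s_1)},$$ and for every $j\ge 0$, $$[u^j]G(z,u)=\frac{3z^2-3+W}{2(z^2-2)}\,z^jS^{j+1}.$$
   Context: A decorated (partial) dual skew Dyck path is a lattice path with the following properties. - It starts at $(0,0)$. - It uses down-steps $(1,-1)$ and up-steps $(1,1)$. - Each up-step is coloured either black or blue. - It never goes below the $x$-axis. - A down-step is never immediately followed by a blue up-step, and a blue up-step is never immediately followed by a down-step. The path need not end on the $x$-axis; its level is the final $y$-coordinate. The empty path counts, with $n=0$ and $j=0$. These paths are the mirror images of skew Dyck path prefixes, with a blue up-step encoding a step $(-1,1)$. *)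

(* Defs.v *)
From Stdlib Require Import Reals Lra ZArith List Bool.
From Coquelicot Require Import Coquelicot.
Import ListNotations.
Open Scope R_scope.
Open Scope bool_scope.

Inductive step : Type :=
  | Down
  | UpBlack
  | UpBlue.

Definition step_dy (s : step) : Z :=
  match s with Down => (-1)%Z | UpBlack => 1%Z | UpBlue => 1%Z end.

Fixpoint level (w : list step) : Z :=
  match w with [] => 0%Z | s :: w' => (step_dy s + level w')%Z end.

Fixpoint never_below (h : Z) (w : list step) : bool :=
  match w with
  | [] => true
  | s :: w' => let h' := (h + step_dy s)%Z in (0 <=? h')%Z && never_below h' w'
  end.

Definition bad_pair (a b : step) : bool :=
  match a, b with
  | Down, UpBlue => true
  | UpBlue, Down => true
  | _, _ => false
  end.

Fixpoint no_bad_pair (w : list step) : bool :=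
  match w with
  | a :: ((b :: _) as t) => negb (bad_pair a b) && no_bad_pair t
  | _ => true
  end.

Definition decorated (w : list step) : bool := never_below 0 w && no_bad_pair w.

Fixpoint words (n : nat) : list (list step) :=
  match n with
  | O => [[]]
  | S m => flat_map (fun w => [Down :: w; UpBlack :: w; UpBlue :: w]) (words m)
  end.

Definition g (n j : nat) : nat :=
  length (filter (fun w => decorated w && Z.eqb (level w) (Z.of_nat j)) (words n)).

Definition Wf (z : R) : R := sqrt (1 - 6 * z ^ 2 + 5 * z ^ 4).
Definition s1 (z : R) : R := 2 * z / (1 + z ^ 2 - Wf z).
Definition Sf (z : R) : R := (1 + z ^ 2 - Wf z) / (2 * z ^ 2).

(* Main.v *)
Require Import Defs.
From Stdlib Require Import Reals Lra Lia ZArith List Bool.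
From Coquelicot Require Import Coquelicot.
Import ListNotations.

Definition C (n : nat) (f : list step -> bool) : nat := length (filter f (words n)).

Lemma len_filter_fm3 (f : list step -> bool) (a b c : list step -> list step) (l : list (list step)) :
  length (filter f (flat_map (fun w => [a w; b w; c w]) l)) =
  (length (filter (fun w => f (a w)) l) + length (filter (fun w => f (b w)) l)
   + length (filter (fun w => f (c w)) l))%nat.
Proof.
  induction l as [|w l IH]; simpl; auto.
  destruct (f (a w)), (f (b w)), (f (c w)); simpl; rewrite IH; lia.
Qed.

Lemma C_S n f : C (S n) f =
  (C n (fun w => f (Down :: w)) + C n (fun w => f (UpBlack :: w)) + C n (fun w => f (UpBlue :: w)))%nat.
Proof. unfold C; simpl. apply len_filter_fm3. Qed.

Lemma C_ext n f f' : (forall w, f w = f' w) -> C n f = C n f'.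
Proof. intros H; unfold C; rewrite (filter_ext _ _ H); auto. Qed.

Lemma C_false n : C n (fun _ => false) = 0%nat.
Proof. unfold C; induction (words n); simpl; auto. Qed.

Lemma C_S_app n : forall f, C (S n) f =
  (C n (fun w => f (w ++ [Down])) + C n (fun w => f (w ++ [UpBlack])) + C n (fun w => f (w ++ [UpBlue])))%nat.
Proof.
  induction n as [|n IH]; intros f.
  - rewrite C_S. unfold C; simpl. reflexivity.
  - rewrite C_S. rewrite (IH (fun w => f (Down :: w))), (IH (fun w => f (UpBlack :: w))),
      (IH (fun w => f (UpBlue :: w))).
    rewrite (C_S n (fun w => f (w ++ [Down]))), (C_S n (fun w => f (w ++ [UpBlack]))),
      (C_S n (fun w => f (w ++ [UpBlue]))). simpl. lia.
Qed.

Lemma C_le n f : (C n f <= 3 ^ n)%nat.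
Proof.
  revert f; induction n; intros f.
  - unfold C; simpl. destruct (f []); simpl; lia.
  - rewrite C_S. simpl. pose proof (IHn (fun w => f (Down :: w))).
    pose proof (IHn (fun w => f (UpBlack :: w))). pose proof (IHn (fun w => f (UpBlue :: w))). lia.
Qed.

Definition step_eqb (a b : step) : bool :=
  match a, b with Down, Down | UpBlack, UpBlack | UpBlue, UpBlue => true | _, _ => false end.

Lemma C_split3 n f : C n f =
  (C n (fun w => f w && step_eqb (last w UpBlack) Down) + C n (fun w => f w && step_eqb (last w UpBlack) UpBlack)
   + C n (fun w => f w && step_eqb (last w UpBlack) UpBlue))%nat.
Proof.
  unfold C. induction (words n) as [|w l IH]; simpl; auto.
  destruct (f w), (last w UpBlack); simpl; rewrite IH; lia.
Qed.

Lemma level_app w s : level (w ++ [s]) = (level w + step_dy s)%Z.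
Proof. induction w; simpl; [lia|]. rewrite IHw; lia. Qed.

Lemma nb_app w : forall h s, never_below h (w ++ [s]) = never_below h w && (0 <=? h + level w + step_dy s)%Z.
Proof.
  induction w as [|a w IH]; intros h s; simpl.
  - rewrite andb_true_r. f_equal. f_equal. lia.
  - rewrite IH. rewrite andb_assoc. f_equal. f_equal. f_equal. lia.
Qed.

Lemma nbp_app_aux w : forall a s, no_bad_pair (a :: w ++ [s]) =
   no_bad_pair (a :: w) && negb (bad_pair (last (a :: w) UpBlack) s).
Proof.
  induction w as [|b w IH]; intros a s.
  - simpl. rewrite andb_true_r. reflexivity.
  - change (no_bad_pair (a :: b :: (w ++ [s])) = no_bad_pair (a :: b :: w) && negb (bad_pair (last (a :: b :: w) UpBlack) s)).
    transitivity (negb (bad_pair a b) && no_bad_pair (b :: w ++ [s])); [reflexivity|].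
    rewrite (IH b s).
    change (last (a :: b :: w) UpBlack) with (last (b :: w) UpBlack).
    change (no_bad_pair (a :: b :: w)) with (negb (bad_pair a b) && no_bad_pair (b :: w)).
    rewrite andb_assoc; reflexivity.
Qed.

Lemma nbp_app w s : no_bad_pair (w ++ [s]) = no_bad_pair w && negb (bad_pair (last w UpBlack) s).
Proof. destruct w as [|a w]. reflexivity. apply nbp_app_aux. Qed.

Lemma dec_app w s : decorated (w ++ [s]) =
  decorated w && ((0 <=? level w + step_dy s)%Z && negb (bad_pair (last w UpBlack) s)).
Proof.
  unfold decorated. rewrite nb_app, nbp_app. simpl.
  destruct (never_below 0 w), (no_bad_pair w), (0 <=? level w + step_dy s)%Z; reflexivity.
Qed.

Lemma last_app1 w s : last (w ++ [s]) UpBlack = s.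
Proof. apply last_last. Qed.

Lemma nb_level w : forall h, (0 <= h)%Z -> never_below h w = true -> (0 <= h + level w)%Z.
Proof.
  induction w as [|a w IH]; intros h H0 H; simpl in *; [lia|].
  apply andb_prop in H as [H1 H2]. apply Z.leb_le in H1.
  specialize (IH _ H1 H2). lia.
Qed.

Lemma dec_level w : decorated w = true -> (0 <= level w)%Z.
Proof. unfold decorated; intros H; apply andb_prop in H as [H _]. apply (nb_level w 0) in H; lia. Qed.

Fixpoint A (n : nat) (s : step) (m : nat) : nat :=
  match n with
  | O => match s, m with UpBlack, O => 1 | _, _ => 0 end
  | S n' =>
    match s with
    | UpBlack => match m with O => 0 | S m' => A n' Down m' + A n' UpBlack m' + A n' UpBlue m' end
    | UpBlue => match m with O => 0 | S m' => A n' UpBlack m' + A n' UpBlue m' end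
    | Down => A n' Down (S m) + A n' UpBlack (S m)
    end
  end.

Definition P (s : step) (m : nat) (w : list step) : bool :=
  decorated w && step_eqb (last w UpBlack) s && Z.eqb (level w) (Z.of_nat m).

Ltac zb := repeat match goal with
  | |- context [Z.eqb ?a ?b] => destruct (Z.eqb_spec a b)
  | |- context [Z.leb ?a ?b] => destruct (Z.leb_spec a b)
  end.

Lemma countA n : forall s m, C n (P s m) = A n s m.
Proof.
  induction n as [|n IH]; intros s m.
  - unfold C, P; simpl. destruct s, m; simpl; reflexivity.
  - rewrite C_S_app. unfold P at 1 2 3. 
    assert (E : forall t, C n (fun w => decorated (w ++ [t]) && step_eqb (last (w ++ [t]) UpBlack) s
            && Z.eqb (level (w ++ [t])) (Z.of_nat m)) =
            if step_eqb t s then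
              C n (fun w => decorated w && ((0 <=? level w + step_dy t)%Z && negb (bad_pair (last w UpBlack) t))
                 && Z.eqb (level w + step_dy t) (Z.of_nat m))
            else 0%nat).
    { intros t. destruct (step_eqb t s) eqn:Ets.
      - apply C_ext. intros w. rewrite dec_app, last_app1, level_app, Ets. rewrite andb_true_r. reflexivity.
      - rewrite <- (C_false n). apply C_ext. intros w. rewrite last_app1, Ets. rewrite andb_false_r. reflexivity. }
    rewrite !E. clear E.
    destruct s; simpl; rewrite ?Nat.add_0_l, ?Nat.add_0_r.
    + rewrite C_split3. rewrite <- (IH Down (S m)), <- (IH UpBlack (S m)).
      transitivity (C n (P Down (S m)) + C n (P UpBlack (S m)) + C n (fun _ => false))%nat;
        [|rewrite C_false; lia].
      f_equal; [f_equal|]; apply C_ext; intros w; unfold P;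
        destruct (decorated w) eqn:Hd; simpl; try reflexivity;
        pose proof (dec_level w Hd); destruct (last w UpBlack); simpl; zb; try lia; reflexivity.
    + destruct m as [|m].
      * transitivity (C n (fun _ => false)); [|apply C_false]. apply C_ext. intros w. destruct (decorated w) eqn:Hd; simpl; [|reflexivity].
        pose proof (dec_level w Hd). zb; simpl; rewrite ?andb_false_r; try reflexivity; lia.
      * rewrite C_split3. rewrite <- (IH Down m), <- (IH UpBlack m), <- (IH UpBlue m).
        f_equal; [f_equal|]; apply C_ext; intros w; unfold P;
        destruct (decorated w) eqn:Hd; simpl; try reflexivity;
        pose proof (dec_level w Hd); destruct (last w UpBlack); simpl; zb; try lia; reflexivity.
    + destruct m as [|m].
      * transitivity (C n (fun _ => false)); [|apply C_false]. apply C_ext. intros w. destruct (decorated w) eqn:Hd; simpl; [|reflexivity].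
        pose proof (dec_level w Hd). zb; simpl; rewrite ?andb_false_r; try reflexivity; lia.
      * rewrite C_split3. rewrite <- (IH UpBlack m), <- (IH UpBlue m).
        transitivity (C n (fun _ => false) + C n (P UpBlack m) + C n (P UpBlue m))%nat;
        [|rewrite C_false; lia].
        f_equal; [f_equal|]; apply C_ext; intros w; unfold P;
        destruct (decorated w) eqn:Hd; simpl; try reflexivity;
        pose proof (dec_level w Hd); destruct (last w UpBlack); simpl; zb; try lia; reflexivity.
Qed.

Lemma g_A n j : g n j = (A n Down j + A n UpBlack j + A n UpBlue j)%nat.
Proof.
  rewrite <- !countA. unfold g. fold (C n (fun w => decorated w && Z.eqb (level w) (Z.of_nat j))).
  rewrite C_split3. f_equal; [f_equal|]; apply C_ext; intros w; unfold P;
  destruct (decorated w), (last w UpBlack); simpl; rewrite ?andb_true_r, ?andb_false_r; reflexivity.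
Qed.

Lemma A_le n : forall s m, (A n s m <= 3 ^ n)%nat.
Proof. intros s m. rewrite <- countA. apply C_le. Qed.

Lemma A_zero n : forall s m, (n < m)%nat -> A n s m = 0%nat.
Proof.
  induction n as [|n IH]; intros s m H.
  - destruct s, m; simpl; try lia; reflexivity.
  - destruct s; simpl.
    + rewrite !IH; lia.
    + destruct m; [lia|]. rewrite !IH; lia.
    + destruct m; [lia|]. rewrite !IH; lia.
Qed.
Open Scope R_scope.

Lemma pow_le_1 x n : 0 <= x <= 1 -> x ^ n <= 1.
Proof. intros H; induction n; simpl; [lra|]. pose proof (pow_le x n). nra. Qed.

Lemma pow_anti x m n : 0 <= x <= 1 -> (m <= n)%nat -> x ^ n <= x ^ m.
Proof.
  intros H Hmn. replace n with (m + (n - m))%nat by lia. rewrite pow_add.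
  pose proof (pow_le x m (proj1 H)). pose proof (pow_le_1 x (n - m) H). pose proof (pow_le x (n-m) (proj1 H)). nra.
Qed.

Definition a (z : R) (s : step) (m n : nat) : R := INR (A n s m) * z ^ n.
Definition X (z : R) (s : step) (m : nat) : R := Series (a z s m).

Lemma INR_A_le n s m : INR (A n s m) <= 3 ^ n.
Proof.
  replace (3 ^ n) with (INR (3 ^ n)). apply le_INR, A_le.
  rewrite pow_INR. f_equal. simpl. lra.
Qed.

Lemma a_bound z s m n : Rabs z < /10 -> Rabs (a z s m n) <= (/2) ^ m * (6 * Rabs z) ^ n.
Proof.
  intros Hz. unfold a. destruct (Nat.lt_ge_cases n m) as [H|H].
  - rewrite A_zero by exact H. simpl. rewrite Rmult_0_l, Rabs_R0.
    apply Rmult_le_pos; apply pow_le; [lra|]. pose proof (Rabs_pos z); lra.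
  - rewrite Rabs_mult, <- RPow_abs. rewrite Rabs_right by (apply Rle_ge, pos_INR).
    pose proof (Rabs_pos z) as Hp.
    replace (6 * Rabs z) with (2 * (3 * Rabs z)) by ring.
    rewrite (Rpow_mult_distr 2).
    pose proof (pow_anti (/2) m n ltac:(lra) H).
    pose proof (INR_A_le n s m). pose proof (pow_le (Rabs z) n Hp).
    pose proof (pow_le (/2) n ltac:(lra)). pose proof (pow_le (/2) m ltac:(lra)).
    assert (E : (/2) ^ n * 2 ^ n = 1). { rewrite <- Rpow_mult_distr. replace (/2*2) with 1 by field. apply pow1. }
    rewrite Rpow_mult_distr.
    assert (Hc3 : INR (A n s m) * Rabs z ^ n <= 3 ^ n * Rabs z ^ n) by (apply Rmult_le_compat_r; auto).
    assert (Hc4 : 3 ^ n * Rabs z ^ n = ((/2) ^ n * 2 ^ n) * (3 ^ n * Rabs z ^ n)) by (rewrite E; ring).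
    assert (0 <= 2 ^ n * (3 ^ n * Rabs z ^ n)). { apply Rmult_le_pos; [apply pow_le; lra|]. apply Rmult_le_pos; auto. apply pow_le; lra. }
    nra.
Qed.

Lemma geom_scal c q : Rabs q < 1 -> is_series (fun n => c * q ^ n) (c * / (1 - q)).
Proof. intros H. apply (is_series_scal_l c (fun n => q ^ n)). apply is_series_geom; auto. Qed.

Lemma ex_a z s m : Rabs z < /10 -> ex_series (a z s m).
Proof.
  intros Hz. apply (@ex_series_le R_AbsRing R_CompleteNormedModule _ (fun n => (/2) ^ m * (6 * Rabs z) ^ n)).
  - intros n. apply a_bound; auto.
  - eexists. apply geom_scal. rewrite Rabs_right; pose proof (Rabs_pos z); lra.
Qed.

Lemma series_abs_le (f : nat -> R) (b : nat -> R) lb :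
  ex_series f -> (forall n, Rabs (f n) <= b n) -> is_series b lb -> Rabs (Series f) <= lb.
Proof.
  intros Hf Hb Hs.
  assert (Ha : ex_series (fun n => Rabs (f n))).
  { apply (@ex_series_le R_AbsRing R_CompleteNormedModule _ b). intros n. simpl. unfold norm; simpl. rewrite Rabs_Rabsolu. apply Hb. eexists; eauto. }
  eapply Rle_trans. apply Series_Rabs; auto.
  rewrite <- (is_series_unique b lb Hs). apply Series_le. intros n; split; [apply Rabs_pos| apply Hb].
  eexists; eauto.
Qed.

Lemma X_bound z s m : Rabs z < /10 -> Rabs (X z s m) <= (/2) ^ m * / (1 - 6 * Rabs z).
Proof.
  intros Hz. unfold X. apply (series_abs_le _ (fun n => (/2) ^ m * (6 * Rabs z) ^ n)).
  - apply ex_a; auto.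
  - intros; apply a_bound; auto.
  - apply geom_scal. rewrite Rabs_right; pose proof (Rabs_pos z); lra.
Qed.

Section Rel.
Variable z : R.
Hypothesis Hz : Rabs z < /10.

Lemma XB0 : X z UpBlack 0 = 1.
Proof.
  unfold X. rewrite Series_incr_1 by (apply ex_a; auto).
  unfold a at 1; simpl. rewrite (Series_ext _ (fun n => 0 * 0)). rewrite Series_scal_l. ring.
  intros n. unfold a. simpl. ring.
Qed.

Lemma XL0 : X z UpBlue 0 = 0.
Proof.
  unfold X. rewrite (Series_ext _ (fun n => 0 * 0)). rewrite Series_scal_l. ring.
  intros n. unfold a. destruct n; simpl; ring.
Qed.

Lemma XB_S m : X z UpBlack (S m) = z * (X z Down m + X z UpBlack m + X z UpBlue m).
Proof.
  unfold X. rewrite Series_incr_1 by (apply ex_a; auto).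
  unfold a at 1; simpl. rewrite Rmult_0_l, Rplus_0_l.
  rewrite <- Series_plus by (apply ex_a; auto).
  try (rewrite <- Series_plus; [| apply (@ex_series_plus R_AbsRing R_NormedModule); apply ex_a; auto | apply ex_a; auto]).
  rewrite <- Series_scal_l. apply Series_ext. intros n. unfold a. simpl.
  rewrite !plus_INR. ring.
Qed.

Lemma XL_S m : X z UpBlue (S m) = z * (X z UpBlack m + X z UpBlue m).
Proof.
  unfold X. rewrite Series_incr_1 by (apply ex_a; auto).
  unfold a at 1; simpl. rewrite Rmult_0_l, Rplus_0_l.
  rewrite <- Series_plus by (apply ex_a; auto).
  try (rewrite <- Series_plus; [| apply (@ex_series_plus R_AbsRing R_NormedModule); apply ex_a; auto | apply ex_a; auto]).
  rewrite <- Series_scal_l. apply Series_ext. intros n. unfold a. simpl.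
  rewrite !plus_INR. ring.
Qed.

Lemma XD m : X z Down m = z * (X z UpBlack (S m) + X z Down (S m)).
Proof.
  unfold X. rewrite Series_incr_1 by (apply ex_a; auto).
  unfold a at 1; simpl. rewrite Rmult_0_l, Rplus_0_l.
  rewrite <- Series_plus by (apply ex_a; auto).
  try (rewrite <- Series_plus; [| apply (@ex_series_plus R_AbsRing R_NormedModule); apply ex_a; auto | apply ex_a; auto]).
  rewrite <- Series_scal_l. apply Series_ext. intros n. unfold a. simpl.
  rewrite !plus_INR. ring.
Qed.

End Rel.

Section Sol.
Variable z : R.
Hypothesis Hz0 : z <> 0.
Hypothesis Hz : Rabs z < /10.

Let Sv := Sf z.
Let lam := z * Sv.

Lemma S_facts : 1/2 <= Sv <= 7/2 /\ z^2 * Sv^2 - (1 + z^2) * Sv + (2 - z^2) = 0 /\ Wf z = 1 + z^2 - 2 * z^2 * Sv.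
Proof.
  assert (Hz2 : 0 < z^2 < /100).
  { split. replace (z^2) with (z*z) by ring. exact (Rsqr_pos_lt z Hz0).
    rewrite <- (pow2_abs z). pose proof (Rabs_pos z). nra. }
  set (R0 := 1 - 6 * z^2 + 5 * z^4).
  assert (HR : 0 <= R0 <= 1) by (unfold R0; replace (z^4) with (z^2*z^2) by ring; nra).
  assert (HW : Wf z * Wf z = R0) by (unfold Wf; apply sqrt_sqrt; lra).
  assert (HW0 : 0 <= Wf z) by (unfold Wf; apply sqrt_pos).
  assert (HW1 : Wf z <= 1) by nra.
  assert (HW2 : R0 <= Wf z) by nra.
  assert (E : 2 * z^2 * Sv = 1 + z^2 - Wf z) by (unfold Sv, Sf; field; auto).
  split; [|split].
  - assert (1 + z^2 - Wf z <= 7 * z^2) by (unfold R0 in HW2; replace (z^4) with (z^2*z^2) in HW2 by ring; nra).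
    split; nra.
  - assert (Hq : 4 * z^2 * (z^2 * Sv^2 - (1 + z^2) * Sv + (2 - z^2)) = 0).
    { replace (Wf z) with (1 + z^2 - 2*z^2*Sv) in HW by lra. unfold R0 in HW. nra. }
    apply Rmult_integral in Hq as [Hq|Hq]; auto. lra.
  - lra.
Qed.

Definition YB (m : nat) : R := match m with O => 1 | _ => (Sv - 1) / Sv * lam ^ m end.
Definition YL (m : nat) : R := match m with O => 0 | _ => lam ^ m / Sv end.
Definition YD (m : nat) : R := (Sv - 2) * lam ^ m.

Lemma YB_S m : YB (S m) = z * (YD m + YB m + YL m).
Proof.
  destruct S_facts as [[H1 H2] [Hq _]].
  destruct m; unfold YB, YL, YD, lam; simpl; field; lra.
Qed.

Lemma YL_S m : YL (S m) = z * (YB m + YL m).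
Proof.
  destruct S_facts as [[H1 H2] [Hq _]].
  destruct m; unfold YB, YL, YD, lam; simpl; field; lra.
Qed.

Lemma YD_rel m : YD m = z * (YB (S m) + YD (S m)).
Proof.
  destruct S_facts as [[H1 H2] [Hq _]].
  unfold YB, YL, YD, lam. simpl.
  assert (E : Sv - 2 = z^2 * (Sv^2 - Sv - 1)) by nra.
  rewrite E at 1. field. lra.
Qed.

Let dB m := X z UpBlack m - YB m.
Let dL m := X z UpBlue m - YL m.
Let dD m := X z Down m - YD m.

Lemma dB_S m : dB (S m) = z * (dD m + dB m + dL m).
Proof. unfold dB, dD, dL. rewrite XB_S, YB_S by auto. ring. Qed.
Lemma dL_S m : dL (S m) = z * (dB m + dL m).
Proof. unfold dB, dL. rewrite XL_S, YL_S by auto. ring. Qed.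
Lemma dD_rel m : dD m = z * (dB (S m) + dD (S m)).
Proof. unfold dB, dD. rewrite XD at 1 by auto. rewrite YD_rel. ring. Qed.
Lemma dB0 : dB 0 = 0.
Proof. unfold dB. rewrite XB0 by auto. simpl. ring. Qed.
Lemma dL0 : dL 0 = 0.
Proof. unfold dL. rewrite XL0 by auto. simpl. ring. Qed.

Lemma invariant m : Rabs (dB m) + Rabs (dL m) <= 2 * Rabs z * Rabs (dD m)
                    /\ 2 ^ m * Rabs (dD 0) <= Rabs (dD m).
Proof.
  assert (Ht : 0 < Rabs z) by (apply Rabs_pos_lt; auto).
  induction m as [|m [IH1 IH2]].
  - rewrite dB0, dL0, !Rabs_R0. simpl. pose proof (Rabs_pos (dD 0)). nra.
  - set (t := Rabs z) in *.
    set (b := dB m) in *. set (l := dL m) in *. set (d := dD m) in *.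
    assert (Eb := dB_S m). assert (El := dL_S m). assert (Ed := dD_rel m).
    fold b l d in Eb, El, Ed.
    set (b' := dB (S m)) in *. set (l' := dL (S m)) in *. set (d' := dD (S m)) in *.
    assert (Hb' : Rabs b' <= t * (Rabs d + (Rabs b + Rabs l))).
    { rewrite Eb, Rabs_mult. apply Rmult_le_compat_l. apply Rabs_pos.
      eapply Rle_trans. apply Rabs_triang. rewrite <- Rplus_assoc. apply Rplus_le_compat_r.
      apply Rabs_triang. }
    assert (Hl' : Rabs l' <= t * (Rabs b + Rabs l)).
    { rewrite El, Rabs_mult. apply Rmult_le_compat_l. apply Rabs_pos. apply Rabs_triang. }
    assert (Hd' : Rabs d <= t * Rabs b' + t * Rabs d').
    { rewrite Ed at 1. rewrite Rabs_mult. fold t. rewrite <- Rmult_plus_distr_l.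
      apply Rmult_le_compat_l. lra. apply Rabs_triang. }
    set (p := Rabs b + Rabs l) in *. set (D := Rabs d) in *.
    pose proof (Rabs_pos b'). pose proof (Rabs_pos l'). pose proof (Rabs_pos d').
    assert (HD : 0 <= D) by apply Rabs_pos.
    assert (Hp : 0 <= p) by (unfold p; pose proof (Rabs_pos b); pose proof (Rabs_pos l); lra).
    assert (Ht1 : t < /10) by exact Hz.
    assert (K1 : Rabs b' <= t * D + 2 * t * t * D) by nra.
    assert (K2 : t * Rabs d' >= D * (1 - t * t - 2 * t * t * t)) by nra.
    assert (K3 : Rabs b' + Rabs l' <= t * D + 4 * t * t * D) by nra.
    assert (K4 : 2 * D <= Rabs d').
    { assert (t * (2 * D) <= t * Rabs d') by nra. apply Rmult_le_reg_l in H2; auto. }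
    split.
    + nra.
    + simpl. nra.
Qed.

Lemma dD_bound m : Rabs (dD m) <= 4 * (/2) ^ m.
Proof.
  destruct S_facts as [[H1 H2] _].
  unfold dD. unfold Rminus. eapply Rle_trans. apply Rabs_triang. rewrite Rabs_Ropp.
  pose proof (X_bound z Down m Hz).
  assert (Ht : 0 <= Rabs z) by apply Rabs_pos.
  assert (Hi : / (1 - 6 * Rabs z) <= 5/2).
  { apply (Rmult_le_reg_l (1 - 6 * Rabs z)). lra. rewrite Rinv_r by lra. lra. }
  assert (HY : Rabs (YD m) <= 3/2 * (/2) ^ m).
  { unfold YD. rewrite Rabs_mult, <- RPow_abs. apply Rmult_le_compat. apply Rabs_pos.
    apply pow_le, Rabs_pos. apply Rabs_le; lra. apply pow_incr. split. apply Rabs_pos.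
    unfold lam. rewrite Rabs_mult. rewrite (Rabs_right Sv) by lra. nra. }
  pose proof (pow_le (/2) m ltac:(lra)).
  assert ((/2) ^ m * / (1 - 6 * Rabs z) <= (/2)^m * (5/2)) by (apply Rmult_le_compat_l; auto).
  lra.
Qed.

Lemma dD0 : dD 0 = 0.
Proof.
  assert (H : forall m, Rabs (dD 0) <= 4 * (/4) ^ m).
  { intros m. destruct (invariant m) as [_ H2]. pose proof (dD_bound m).
    assert (E : (/4) ^ m = (/2)^m * (/2)^m) by (rewrite <- Rpow_mult_distr; f_equal; field).
    assert (E2 : (/2)^m * 2^m = 1) by (rewrite <- Rpow_mult_distr; replace (/2*2) with 1 by field; apply pow1).
    pose proof (pow_le (/2) m ltac:(lra)).
    assert ((/2)^m * (2 ^ m * Rabs (dD 0)) <= (/2)^m * (4 * (/2)^m)) by (apply Rmult_le_compat_l; lra).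
    rewrite E. replace (Rabs (dD 0)) with ((/2)^m * (2 ^ m * Rabs (dD 0))) by (rewrite <- Rmult_assoc, E2; ring).
    lra. }
  assert (L : is_lim_seq (fun m => 4 * (/4) ^ m) 0).
  { replace (Finite 0) with (Rbar_mult 4 0) by (simpl; f_equal; ring).
    apply is_lim_seq_scal_l. apply is_lim_seq_geom. rewrite Rabs_right; lra. }
  pose proof (is_lim_seq_le (fun _ => Rabs (dD 0)) _ (Rabs (dD 0)) 0 H (is_lim_seq_const _) L) as Hle.
  simpl in Hle. apply Rabs_eq_0. pose proof (Rabs_pos (dD 0)). lra.
Qed.

Lemma d_zero m : dB m = 0 /\ dL m = 0 /\ dD m = 0.
Proof.
  induction m as [|m [IB [IL ID]]].
  - split; [apply dB0|split; [apply dL0|apply dD0]].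
  - assert (EB : dB (S m) = 0) by (rewrite dB_S, IB, IL, ID; ring).
    split; [exact EB|split].
    + rewrite dL_S, IB, IL; ring.
    + pose proof (dD_rel m) as E. rewrite ID, EB in E.
      rewrite Rplus_0_l in E. symmetry in E. apply Rmult_integral in E as [E|E]; auto. contradiction.
Qed.

Lemma T_value m : X z Down m + X z UpBlack m + X z UpBlue m = (Sv - 1) * lam ^ m.
Proof.
  destruct (d_zero m) as [IB [IL ID]]. unfold dB, dL, dD in *.
  destruct S_facts as [[H1 H2] _].
  replace (X z Down m) with (YD m) by lra. replace (X z UpBlack m) with (YB m) by lra.
  replace (X z UpBlue m) with (YL m) by lra.
  destruct m; unfold YB, YL, YD; simpl; field; lra.
Qed.

End Sol.

Lemma sum_ext_zero (f : nat -> R) n N : (forall j, (n < j)%nat -> f j = 0) -> (n <= N)%nat ->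
  sum_f_R0 f n = sum_f_R0 f N.
Proof.
  intros Hf HN. induction HN as [|N HN IH]; auto.
  simpl. rewrite <- IH, (Hf (S N)) by lia. ring.
Qed.

Lemma fubini_fin (b : nat -> nat -> R) N :
  sum_f_R0 (fun n => sum_f_R0 (fun j => b n j) N) N = sum_f_R0 (fun j => sum_f_R0 (fun n => b n j) N) N.
Proof.
  induction N as [|N IH]; simpl; auto.
  rewrite !sum_plus, IH. change (sum_f_R0 (b (S N)) N) with (sum_f_R0 (fun j => b (S N) j) N). ring.
Qed.

Lemma sum_n_R (f : nat -> R) N : sum_n f N = sum_f_R0 f N.
Proof. apply sum_n_Reals. Qed.

Lemma interchange (b : nat -> nat -> R) (Rj : nat -> R) (L M rho sig : R) :
  0 <= rho < 1 -> 0 <= sig < 1 -> 0 <= M ->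
  (forall n j, (n < j)%nat -> b n j = 0) ->
  (forall n j, Rabs (b n j) <= M * rho ^ n * sig ^ j) ->
  (forall j, is_series (fun n => b n j) (Rj j)) -> is_series Rj L ->
  is_series (fun n => sum_n (fun j => b n j) n) L.
Proof.
  intros Hr Hs HM Hz Hb Hj HL.
  set (c := M / ((1 - rho) * (1 - sig))).
  assert (Hc : 0 <= c) by (unfold c; apply Rmult_le_pos; auto; apply Rlt_le, Rinv_0_lt_compat; nra).
  assert (Tail : forall j N, Rabs (sum_f_R0 (fun n => b n j) N - Rj j) <= M * sig ^ j * rho ^ (S N) / (1 - rho)).
  { intros j N.
    assert (Ht : is_series (fun k => b (S N + k)%nat j) (Rj j - sum_n (fun n => b n j) N)).
    { apply (is_series_incr_n (fun n => b n j) (S N)). lia. simpl.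
      match goal with |- is_series _ ?x => replace x with (Rj j); [exact (Hj j)|] end.
      unfold plus; simpl. rewrite !sum_n_R. ring. }
    rewrite <- sum_n_R. rewrite <- Rabs_Ropp. replace (- (sum_n (fun n => b n j) N - Rj j)) with (Rj j - sum_n (fun n : nat => b n j) N) by ring.
    rewrite <- (is_series_unique _ _ Ht).
    apply (series_abs_le _ (fun k => (M * sig ^ j * rho ^ (S N)) * rho ^ k)).
    - eexists; eauto.
    - intros k. eapply Rle_trans. apply Hb. rewrite pow_add.
      pose proof (pow_le rho (S N) (proj1 Hr)). pose proof (pow_le rho k (proj1 Hr)).
      pose proof (pow_le sig j (proj1 Hs)). right. ring.
    - unfold Rdiv. apply geom_scal. rewrite Rabs_right; lra. }
  assert (EP : forall N, sum_n (fun n => sum_n (fun j => b n j) n) N =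
                 sum_n Rj N + sum_f_R0 (fun j => sum_f_R0 (fun n => b n j) N - Rj j) N).
  { intros N. rewrite sum_n_R. rewrite (sum_eq _ (fun n => sum_f_R0 (fun j => b n j) N)).
    rewrite fubini_fin, minus_sum, sum_n_R. match goal with |- ?x = ?y => change (@eq R x y) end; ring.
    intros n Hn. rewrite sum_n_R. apply sum_ext_zero; auto. }
  assert (EB : forall N, Rabs (sum_f_R0 (fun j => sum_f_R0 (fun n => b n j) N - Rj j) N) <= c * rho ^ (S N)).
  { intros N. eapply Rle_trans. apply Rsum_abs.
    eapply Rle_trans. apply sum_Rle. intros j _. apply Tail.
    rewrite (sum_eq _ (fun j => sig ^ j * (M * rho ^ (S N) / (1 - rho)))) by (intros; unfold Rdiv; ring).
    rewrite <- scal_sum. rewrite tech3 by lra.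
    pose proof (pow_le sig (S N) (proj1 Hs)). pose proof (pow_le rho (S N) (proj1 Hr)).
    unfold c. unfold Rdiv. rewrite Rinv_mult.
    assert (0 < / (1 - sig)) by (apply Rinv_0_lt_compat; lra).
    assert (0 < / (1 - rho)) by (apply Rinv_0_lt_compat; lra).
    assert (0 <= M * rho ^ S N * / (1 - rho)) by (apply Rmult_le_pos; [apply Rmult_le_pos|]; lra).
    assert ((1 - sig ^ S N) <= 1) by lra.
    assert ((1 - sig ^ S N) * / (1 - sig) <= / (1 - sig)) by nra.
    nra. }
  assert (GL : forall k, is_lim_seq (fun N => k * rho ^ (S N)) 0).
  { intros k. replace (Finite 0) with (Rbar_mult (k * rho) 0) by (simpl; f_equal; ring).
    apply (is_lim_seq_ext (fun N => (k * rho) * rho ^ N)). intros; simpl; ring.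
    apply is_lim_seq_scal_l. apply is_lim_seq_geom. rewrite Rabs_right; lra. }
  unfold is_series. change (is_lim_seq (sum_n (fun n => sum_n (fun j => b n j) n)) L).
  apply (is_lim_seq_ext (fun N => sum_n Rj N + sum_f_R0 (fun j => sum_f_R0 (fun n => b n j) N - Rj j) N)).
  { intros; symmetry; apply EP. }
  replace L with (L + 0) by ring.
  apply is_lim_seq_plus'. exact HL.
  apply (is_lim_seq_le_le (fun N => - (c * rho ^ (S N))) _ (fun N => c * rho ^ (S N))).
  - intros N. specialize (EB N). apply Rabs_le_between in EB. lra.
  - apply (is_lim_seq_ext (fun N => (- c) * rho ^ (S N))). intros; ring. apply GL.
  - apply GL.
Qed.

Lemma second_claim z j : z <> 0 -> Rabs z < /10 ->
  is_series (fun n => INR (g n j) * z ^ n) ((Sf z - 1) * (z * Sf z) ^ j).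
Proof.
  intros Hz0 Hz. rewrite <- (T_value z Hz0 Hz j).
  apply (is_series_ext (fun n => a z Down j n + a z UpBlack j n + a z UpBlue j n)).
  { intros n. rewrite g_A, !plus_INR. unfold a. match goal with |- ?x = ?y => change (@eq R x y) end; ring. }
  apply (is_series_plus (fun n => a z Down j n + a z UpBlack j n)).
  apply (is_series_plus (a z Down j)).
  all: apply Series_correct, ex_a; auto.
Qed.

Lemma g_zero n j : (n < j)%nat -> g n j = 0%nat.
Proof. intros H. rewrite g_A, !A_zero; auto. Qed.

Lemma g_le n j : INR (g n j) <= 3 * 3 ^ n.
Proof. rewrite g_A, !plus_INR. pose proof (INR_A_le n Down j). pose proof (INR_A_le n UpBlack j).
  pose proof (INR_A_le n UpBlue j). lra. Qed.

Lemma frac_eq a b c d : b <> 0 -> d <> 0 -> a * d = c * b -> a / b = c / d.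
Proof. intros Hb Hd E. apply (Rmult_eq_reg_r (b * d)). unfold Rdiv.
  replace (a * / b * (b * d)) with (a * d * (/ b * b)) by ring.
  replace (c * / d * (b * d)) with (c * b * (/ d * d)) by ring.
  rewrite !Rinv_l by auto. rewrite E; ring. apply Rmult_integral_contrapositive; auto. Qed.

Theorem theorem3 :
  exists r : R, 0 < r /\
  forall z : R, 0 < Rabs z < r ->
    (forall u : R, Rabs u < r ->
       is_series (fun n : nat => sum_n (fun j : nat => INR (g n j) * u ^ j) n * z ^ n)
         ((3 * z ^ 2 - 3 + Wf z) / (2 * z * (2 - z ^ 2) * (u - s1 z))))
    /\
    (forall j : nat,
       is_series (fun n : nat => INR (g n j) * z ^ n)
         ((3 * z ^ 2 - 3 + Wf z) / (2 * (z ^ 2 - 2)) * z ^ j * Sf z ^ (j + 1))).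
Proof.
  exists (/10). split; [lra|]. intros z [Hz1 Hz].
  assert (Hz0 : z <> 0) by (intros E; rewrite E, Rabs_R0 in Hz1; lra).
  destruct (S_facts z Hz0 Hz) as [[HS1 HS2] [Hq HW]].
  set (Sv := Sf z) in *.
  assert (Hz2 : 0 < z ^ 2 < /100).
  { split. replace (z^2) with (z*z) by ring. exact (Rsqr_pos_lt z Hz0).
    rewrite <- (pow2_abs z). nra. }
  assert (KA : (3 * z ^ 2 - 3 + Wf z) = 2 * (z ^ 2 - 2) * (Sv - 1) / Sv).
  { rewrite HW. apply (Rmult_eq_reg_r Sv); [|lra]. replace (2 * (z ^ 2 - 2) * (Sv - 1) / Sv * Sv) with (2 * (z ^ 2 - 2) * (Sv - 1)) by (field; lra). nra. }
  split.
  - intros u Hu.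
    assert (Hq1 : Rabs (z * Sv * u) < 1).
    { rewrite !Rabs_mult, (Rabs_right Sv) by lra. pose proof (Rabs_pos z). pose proof (Rabs_pos u).
      assert (Rabs z * Sv <= 1) by nra. nra. }
    assert (Hs1 : s1 z = / (z * Sv)).
    { unfold s1. rewrite HW. replace (1 + z ^ 2 - (1 + z ^ 2 - 2 * z ^ 2 * Sv)) with (2 * z ^ 2 * Sv) by ring.
      field. split; [lra|auto]. }
    assert (HL : (3 * z ^ 2 - 3 + Wf z) / (2 * z * (2 - z ^ 2) * (u - s1 z)) = (Sv - 1) * / (1 - z * Sv * u)).
    { rewrite KA, Hs1. assert (1 - z * Sv * u <> 0) by (pose proof (Rle_abs (z * Sv * u)); lra).
      field. repeat split; try lra; auto. }
    rewrite HL.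
    apply (is_series_ext (fun n => sum_n (fun j => INR (g n j) * u ^ j * z ^ n) n)).
    { intros n. rewrite !sum_n_R. rewrite Rmult_comm, scal_sum. apply sum_eq. intros; ring. }
    apply (interchange _ (fun j => (Sv - 1) * (z * Sv * u) ^ j) _ 3 (3 * Rabs z) (Rabs u)).
    + pose proof (Rabs_pos z); lra.
    + pose proof (Rabs_pos u); lra.
    + lra.
    + intros n j H. rewrite g_zero by auto. simpl; ring.
    + intros n j. rewrite !Rabs_mult, <- !RPow_abs, Rabs_right by (apply Rle_ge, pos_INR).
      rewrite Rpow_mult_distr. pose proof (g_le n j).
      pose proof (pow_le (Rabs u) j (Rabs_pos u)). pose proof (pow_le (Rabs z) n (Rabs_pos z)).
      assert (INR (g n j) * Rabs u ^ j <= 3 * 3 ^ n * Rabs u ^ j) by (apply Rmult_le_compat_r; auto).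
      assert (INR (g n j) * Rabs u ^ j * Rabs z ^ n <= 3 * 3 ^ n * Rabs u ^ j * Rabs z ^ n) by (apply Rmult_le_compat_r; auto).
      lra.
    + intros j. apply (is_series_ext (fun n => (INR (g n j) * z ^ n) * u ^ j)). intros; match goal with |- ?x = ?y => change (@eq R x y) end; ring.
      replace ((Sv - 1) * (z * Sv * u) ^ j) with (((Sv - 1) * (z * Sv) ^ j) * u ^ j) by (rewrite !Rpow_mult_distr; ring).
      apply is_series_scal_r. apply second_claim; auto.
    + apply geom_scal; auto.
  - intros j. 
    replace ((3 * z ^ 2 - 3 + Wf z) / (2 * (z ^ 2 - 2)) * z ^ j * Sv ^ (j + 1)) with ((Sv - 1) * (z * Sv) ^ j).
    apply second_claim; auto.
    rewrite KA, Rpow_mult_distr, pow_add. simpl. field. lra.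
Qed.
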